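(* Let $\otimes$ and $\oplus$ be uninorms on $[0,1]$ and let $\neg$ be a strong negation function. Then $(\otimes,\oplus)$ satisfies the rearrangement inequality if and only if $(\Phi^{\neg}(\oplus),\Phi^{\neg}(\otimes))$ satisfies the dual rearrangement inequality.
   Context: A uninorm is a function $\otimes:[0,1]^2\to[0,1]$ that is commutative, associative, monotonic (for all $x,y,z\in[0,1]$, $x\leq y$ implies $x\otimes z\leq y\otimes z$), and has an identity element $e\in[0,1]$ ($x\otimes e=x$ for all $x$). A negation is a monotonically nonincreasing function $\neg:[0,1]\to[0,1]$ with $\neg(0)=1$, $\neg(1)=0$; it is strong if it is strictly monotone and involutive ($\neg\neg x=x$ for all $x$). For a function $f:[0,1]^2\to[0,1]$, its dual is $\Phi^{\neg}(f)(x,y)=\neg(f(\neg x,\neg y))$. For uninorms $\otimes,\oplus$, the pair $(\otimes,\oplus)$ satisfies the rearrangement inequality if for every $n\geq1$, all $0\leq x_1\leq\cdots\leq x_n\leq 1$, $0\leq y_1\leq\cdots\leq y_n\leq 1$ and every permutation $\sigma$ of $\{1,\dots,n\}$, $$(x_n\otimes y_1)\oplus\cdots\oplus(x_1\otimes y_n)\leq (x_{\sigma(1)}\otimes y_1)\oplus\cdots\oplus(x_{\sigma(n)}\otimes y_n)\leq (x_1\otimes y_1)\oplus\cdots\oplus(x_n\otimes y_n),$$ and satisfies the dual rearrangement inequality if for all such data $$(x_n\oplus y_1)\otimes\cdots\otimes(x_1\oplus y_n)\geq (x_{\sigma(1)}\oplus y_1)\otimes\cdots\otimes(x_{\sigma(n)}\oplus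 y_n)\geq (x_1\oplus y_1)\otimes\cdots\otimes(x_n\oplus y_n).$$ (For a pair $(\otimes,\oplus)$ the first component plays the role of $\otimes$ and the second the role of $\oplus$ in these definitions.) *)

(* Defs.v *)
(* concrete reals R. Binary operations on [0,1] are modelled as
   functions R -> R -> R; all axioms are only required on [0,1]. *)
From Stdlib Require Import Reals Lra Lia.
Open Scope R_scope.

Definition in01 (x : R) : Prop := 0 <= x <= 1.

Definition is_uninorm (U : R -> R -> R) : Prop :=
  (forall x y, in01 x -> in01 y -> in01 (U x y)) /\
  (forall x y, in01 x -> in01 y -> U x y = U y x) /\
  (forall x y z, in01 x -> in01 y -> in01 z -> U x (U y z) = U (U x y) z) /\
  (forall x y z, in01 x -> in01 y -> in01 z -> x <= y -> U x z <= U y z) /\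
  (exists e, in01 e /\ forall x, in01 x -> U x e = x).

Definition is_negation (N : R -> R) : Prop :=
  (forall x, in01 x -> in01 (N x)) /\
  (forall x y, in01 x -> in01 y -> x <= y -> N y <= N x) /\
  N 0 = 1 /\ N 1 = 0.

Definition is_strong_negation (N : R -> R) : Prop :=
  is_negation N /\
  (forall x y, in01 x -> in01 y -> x < y -> N y < N x) /\
  (forall x, in01 x -> N (N x) = x).

Definition dual_op (N : R -> R) (f : R -> R -> R) : R -> R -> R :=
  fun x y => N (f (N x) (N y)).

(* n-fold aggregation  a_0 * a_1 * ... * a_(n-1)  (n >= 1), bracketed from the left
   (irrelevant by associativity). *)
Fixpoint fold_from (op : R -> R -> R) (a : nat -> R) (acc : R) (i k : nat) : R :=
  match k with
  | O => acc
  | S k' => fold_from op a (op acc (a i)) (S i) k'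
  end.

Definition big_op (op : R -> R -> R) (n : nat) (a : nat -> R) : R :=
  fold_from op a (a 0%nat) 1%nat (n - 1).

Definition sorted01 (n : nat) (x : nat -> R) : Prop :=
  (forall i, (i < n)%nat -> in01 (x i)) /\
  (forall i j, (i <= j < n)%nat -> x i <= x j).

Definition is_perm (n : nat) (s : nat -> nat) : Prop :=
  (forall i, (i < n)%nat -> (s i < n)%nat) /\
  (forall i j, (i < n)%nat -> (j < n)%nat -> s i = s j -> i = j).

Definition rearrangement_ineq (T S : R -> R -> R) : Prop :=
  forall (n : nat) (x y : nat -> R) (s : nat -> nat),
    (1 <= n)%nat -> sorted01 n x -> sorted01 n y -> is_perm n s ->
    big_op S n (fun i => T (x (n - 1 - i)%nat) (y i))
      <= big_op S n (fun i => T (x (s i)) (y i))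
    /\ big_op S n (fun i => T (x (s i)) (y i))
      <= big_op S n (fun i => T (x i) (y i)).

Definition dual_rearrangement_ineq (T S : R -> R -> R) : Prop :=
  forall (n : nat) (x y : nat -> R) (s : nat -> nat),
    (1 <= n)%nat -> sorted01 n x -> sorted01 n y -> is_perm n s ->
    big_op T n (fun i => S (x (n - 1 - i)%nat) (y i))
      >= big_op T n (fun i => S (x (s i)) (y i))
    /\ big_op T n (fun i => S (x (s i)) (y i))
      >= big_op T n (fun i => S (x i) (y i)).

(* Main.v *)
Require Import Defs.
From Stdlib Require Import Reals.
From Stdlib Require Import Lra Lia.
Open Scope R_scope.

Fixpoint Pn (op : R -> R -> R) (m : nat) (a : nat -> R) : R :=
  match m with O => a O | S k => op (Pn op k a) (a m) end.

Lemma fold_Pn op a k : forall m, fold_from op a (Pn op m a) (S m) k = Pn op (m + k) a.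
Proof.
  induction k as [|k IH]; intro m; simpl.
  - now rewrite Nat.add_0_r.
  - change (op (Pn op m a) (a (S m))) with (Pn op (S m) a).
    rewrite IH. f_equal. lia.
Qed.

Lemma big_Pn op n a : big_op op n a = Pn op (n - 1) a.
Proof. unfold big_op. apply (fold_Pn op a (n-1) 0). Qed.

Lemma Pn_ext op m a b : (forall i, (i <= m)%nat -> a i = b i) -> Pn op m a = Pn op m b.
Proof.
  induction m; intro H; simpl.
  - apply H; lia.
  - rewrite IHm by (intros; apply H; lia). rewrite H by lia. reflexivity.
Qed.

Lemma Pn_in01 op m a : (forall x y, in01 x -> in01 y -> in01 (op x y)) ->
  (forall i, (i <= m)%nat -> in01 (a i)) -> in01 (Pn op m a).
Proof.
  intros Hc; induction m; intro H; simpl.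
  - apply H; lia.
  - apply Hc; [apply IHm; intros; apply H; lia | apply H; lia].
Qed.

Lemma Pn_shift U m : is_uninorm U -> forall b, (forall i, (i <= S m)%nat -> in01 (b i)) ->
  Pn U (S m) b = U (b O) (Pn U m (fun i => b (S i))).
Proof.
  intros HU. destruct HU as [Hc [Hcomm [Has [Hmo Hid]]]].
  induction m; intros b Hb.
  - reflexivity.
  - change (Pn U (S (S m)) b) with (U (Pn U (S m) b) (b (S (S m)))).
    rewrite IHm by (intros; apply Hb; lia).
    rewrite <- Has.
    + reflexivity.
    + apply Hb; lia.
    + apply Pn_in01; auto. intros; apply Hb; lia.
    + apply Hb; lia.
Qed.

Lemma Pn_rev U m : is_uninorm U -> forall a, (forall i, (i <= m)%nat -> in01 (a i)) ->
  Pn U m (fun i => a (m - i)%nat) = Pn U m a.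
Proof.
  intros HU. induction m; intros a Ha.
  - reflexivity.
  - rewrite Pn_shift; auto.
    2:{ intros; apply Ha; lia. }
    simpl (S m - 0)%nat.
    change (fun i => a (S m - S i)%nat) with (fun i => a (m - i)%nat).
    rewrite IHm by (intros; apply Ha; lia).
    destruct HU as [Hc [Hcomm _]].
    simpl. apply Hcomm; [apply Ha; lia| apply Pn_in01; auto; intros; apply Ha; lia].
Qed.

Lemma Pn_dual U N m a : is_uninorm U -> is_strong_negation N ->
  (forall i, (i <= m)%nat -> in01 (a i)) ->
  Pn (dual_op N U) m a = N (Pn U m (fun i => N (a i))).
Proof.
  intros HU HN. destruct HU as [Hc _]. destruct HN as [[HN01 _] [_ Hinv]].
  induction m; intro Ha; simpl.
  - rewrite Hinv; auto with arith.
  - rewrite IHm by (intros; apply Ha; lia). unfold dual_op.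
    rewrite Hinv; [reflexivity|apply Pn_in01; auto; intros; apply HN01, Ha; lia].
Qed.

Lemma K T S N m x y f : is_uninorm T -> is_uninorm S -> is_strong_negation N ->
  (forall i, (i <= m)%nat -> in01 (x i)) -> (forall i, (i <= m)%nat -> in01 (y i)) ->
  (forall i, (i <= m)%nat -> (f i <= m)%nat) ->
  Pn (dual_op N S) m (fun i => dual_op N T (x (f i)) (y i))
  = N (Pn S m (fun i => T (N (x (f (m - i)%nat))) (N (y (m - i)%nat)))).
Proof.
  intros HT HS HN Hx Hy Hf.
  pose proof HN as [[HN01 _] [_ Hinv]].
  pose proof HT as [HTc _].
  rewrite Pn_dual; auto.
  2:{ intros i Hi. unfold dual_op. apply HN01, HTc; apply HN01; auto. }
  f_equal.
  rewrite <- (Pn_rev S m HS).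
  - apply Pn_ext. intros i Hi. unfold dual_op. rewrite Hinv; auto.
    apply HTc; apply HN01; auto. apply Hx, Hf; lia. apply Hy; lia.
  - intros i Hi. apply HN01. unfold dual_op. apply HN01, HTc; apply HN01; auto.
Qed.

Lemma Nanti N a b : is_strong_negation N -> in01 a -> in01 b -> a <= b -> N b <= N a.
Proof. intros [[_ [H _]] _]; auto. Qed.

Lemma Nrefl N a b : is_strong_negation N -> in01 a -> in01 b -> N a <= N b -> b <= a.
Proof.
  intros [_ [H _]] Ha Hb Hl. destruct (Rle_lt_dec b a); auto.
  specialize (H a b Ha Hb r). lra.
Qed.

Lemma rev_sorted N n x : is_strong_negation N -> (1 <= n)%nat -> sorted01 n x ->
  sorted01 n (fun j => N (x (n - 1 - j)%nat)).
Proof.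
  intros HN Hn [H1 H2]. pose proof HN as [[HN01 _] _]. split.
  - intros i Hi. apply HN01, H1; lia.
  - intros i j Hij. apply Nanti; auto; try (apply H1; lia). apply H2; lia.
Qed.

Lemma rev_perm n s : (1 <= n)%nat -> is_perm n s ->
  is_perm n (fun i => (n - 1 - s (n - 1 - i)))%nat.
Proof.
  intros Hn [H1 H2]. split.
  - intros i Hi. lia.
  - intros i j Hi Hj E. assert (s (n-1-i)%nat < n)%nat by (apply H1; lia).
    assert (s (n-1-j)%nat < n)%nat by (apply H1; lia).
    assert (n - 1 - i = n - 1 - j)%nat by (apply H2; lia). lia.
Qed.

Theorem theorem3 (T S : R -> R -> R) (N : R -> R) :
  is_uninorm T -> is_uninorm S -> is_strong_negation N ->
  (rearrangement_ineq T S <->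
   dual_rearrangement_ineq (dual_op N S) (dual_op N T)).
Proof.
  intros HT HS HN.
  pose proof HN as [[HN01 _] [_ Hinv]].
  pose proof HT as [HTc _]. pose proof HS as [HSc _].
  split.
  - intros RI n x y s Hn Hx Hy Hs.
    pose proof Hx as [Hx1 _]. pose proof Hy as [Hy1 _]. pose proof Hs as [Hs1 Hs2].
    specialize (RI n _ _ _ Hn (rev_sorted N n x HN Hn Hx) (rev_sorted N n y HN Hn Hy)
                  (rev_perm n s Hn Hs)).
    rewrite !big_Pn in RI |- *.
    erewrite !(K T S N (n-1) x y); auto;
      try (intros; apply Hx1; lia); try (intros; apply Hy1; lia);
      try (intros; lia); try (intros; cbv beta; assert (s i < n)%nat by (apply Hs1; lia); lia).
    destruct RI as [R1 R2].
    match type of R1 with Pn S _ ?a <= Pn S _ ?b =>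
      assert (Ea : Pn S (n-1) a = Pn S (n-1) (fun i => T (N (x (n - 1 - (n - 1 - i))%nat)) (N (y (n - 1 - i)%nat))))
      ; [|assert (Eb : Pn S (n-1) b = Pn S (n-1) (fun i => T (N (x (s (n - 1 - i)%nat))) (N (y (n - 1 - i)%nat))))] end.
    { apply Pn_ext; intros i Hi. f_equal; f_equal; f_equal; lia. }
    { apply Pn_ext; intros i Hi. assert (s (n-1-i) < n)%nat by (apply Hs1; lia).
      f_equal; f_equal; f_equal; lia. }
    match type of R2 with _ <= Pn S _ ?c =>
      assert (Ec : Pn S (n-1) c = Pn S (n-1) (fun i => T (N (x (n - 1 - i)%nat)) (N (y (n - 1 - i)%nat)))) end.
    { apply Pn_ext; intros i Hi. f_equal; f_equal; f_equal; lia. }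
    try rewrite Ea in R1; try rewrite Eb in R1; try rewrite Eb in R2; try rewrite Ec in R2.
    split; apply Rle_ge, Nanti; auto; try (apply Pn_in01; auto; intros i Hi; apply HTc; apply HN01; [apply Hx1|apply Hy1]; try lia; assert (s (n-1-i) < n)%nat by (apply Hs1; lia); lia).
  - intros DRI n x y s Hn Hx Hy Hs.
    pose proof Hx as [Hx1 _]. pose proof Hy as [Hy1 _]. pose proof Hs as [Hs1 Hs2].
    remember (fun j => N (x (n - 1 - j)%nat)) as x' eqn:Ex.
    remember (fun j => N (y (n - 1 - j)%nat)) as y' eqn:Ey.
    assert (Hx' : sorted01 n x') by (subst; apply rev_sorted; auto).
    assert (Hy' : sorted01 n y') by (subst; apply rev_sorted; auto).
    pose proof Hx' as [Hx1' _]. pose proof Hy' as [Hy1' _].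
    specialize (DRI n x' y' _ Hn Hx' Hy' (rev_perm n s Hn Hs)).
    rewrite !big_Pn in DRI |- *.
    erewrite !(K T S N (n-1) x' y') in DRI; auto;
      try (intros; apply Hx1'; lia); try (intros; apply Hy1'; lia);
      try (intros; lia).
    destruct DRI as [R1 R2]. apply Rge_le in R1, R2.
    assert (Ea : Pn S (n-1) (fun i => T (N (x' ((fun i0 => n - 1 - i0) (n - 1 - i))%nat)) (N (y' (n - 1 - i)%nat)))
                 = Pn S (n-1) (fun i => T (x (n - 1 - i)%nat) (y i))).
    { apply Pn_ext; intros i Hi. subst x' y'. cbv beta.
      rewrite !Hinv by (first [apply Hx1|apply Hy1]; lia). f_equal; f_equal; lia. }
    assert (Eb : Pn S (n-1) (fun i => T (N (x' ((fun i0 => n - 1 - s (n - 1 - i0)) (n - 1 - i))%nat)) (N (y' (n - 1 - i)%nat)))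
                 = Pn S (n-1) (fun i => T (x (s i)) (y i))).
    { apply Pn_ext; intros i Hi. subst x' y'. cbv beta.
      assert (Hii : (n - 1 - (n - 1 - i) = i)%nat) by lia. rewrite Hii. assert (s i < n)%nat by (apply Hs1; lia).
      rewrite !Hinv by (first [apply Hx1|apply Hy1]; lia). f_equal; f_equal; lia. }
    assert (Ec : Pn S (n-1) (fun i => T (N (x' ((fun i0 => i0) (n - 1 - i))%nat)) (N (y' (n - 1 - i)%nat)))
                 = Pn S (n-1) (fun i => T (x i) (y i))).
    { apply Pn_ext; intros i Hi. subst x' y'. cbv beta.
      rewrite !Hinv by (first [apply Hx1|apply Hy1]; lia). f_equal; f_equal; lia. }
    rewrite Ea, Eb in R1. rewrite Eb, Ec in R2.
    split; eapply Nrefl; eauto; apply Pn_in01; auto; intros i Hi; apply HTc;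
      first [apply Hx1 | apply Hy1]; try lia; apply Hs1; lia.
Qed.
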